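(* Let $n\ge 4$, $N=\{1,\dots,n\}$, fix distinct $i_1,i_2\in N$ and let $\hat N^c=N\setminus\{i_1,i_2\}$. Then the inequality $$x_{i_2i_1}+\sum_{j\in\hat N^c}\left(x_{i_1j}+x_{ji_1}\right)-\sum_{j\in\hat N^c}x_{i_2j}-\sum_{j,j'\in\hat N^c:\,j\ne j'} x_{jj'}\le 2-\frac{(n-3)(n-4)}{2}$$ defines a facet of the weak order polytope $P^n_{WO}$.
   Context: Let $N=\{1,\dots,n\}$ and $A_N=\{(i,j): i,j\in N, i\ne j\}$. A weak order on $N$ is a binary relation $W\subseteq N\times N$ that is reflexive, transitive and total; $(i,j)\in W$ is read ''$i$ is preferred over or tied with $j$''. The characteristic vector of $W$ is $x^W\in\{0,1\}^{A_N}$ with $x^W_{(i,j)}=1$ if $(i,j)\in W$ and $0$ otherwise. The weak order polytope $P^n_{WO}$ is the convex hull of the characteristic vectors of all weak orders on $N$; its points are vectors $x\in\mathbb{R}^{A_N}$ and $x_{ij}$ denotes the coordinate $x_{(i,j)}$. $P^n_{WO}$ has dimension $n(n-1)$. An inequality $\pi x\le\pi_0$ defines a facet of a polytope $P$ if it is valid for $P$ (holds for all $x\in P$) and the face $P\cap\{x:\pi x=\pi_0\}$ is nonempty, proper, and contains $\dim(P)$ affinely independent points. *)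

(* Defs.v *)
From mathcomp Require Import all_boot all_order all_algebra.
Set Implicit Arguments. Unset Strict Implicit. Unset Printing Implicit Defensive.
Import Order.TTheory GRing.Theory Num.Theory.
Local Open Scope ring_scope.

(* The arc set A_N = {(i,j) : i <> j} on N = 'I_n (i.e. {0,...,n-1}). *)
Definition arc (n : nat) := {p : 'I_n * 'I_n | p.1 != p.2}.

Definition vec (R : Type) (n : nat) := arc n -> R.

(* coordinate x_{ij} (only meaningful for i <> j; 0 on the diagonal) *)
Definition xc (R : ringType) n (x : vec R n) (i j : 'I_n) : R :=
  match insub (i, j) with Some a => x a | None => 0 end.

Definition weak_order n (W : {set 'I_n * 'I_n}) : Prop :=
  (forall i, (i, i) \in W) /\
  (forall i j k, (i, j) \in W -> (j, k) \in W -> (i, k) \in W) /\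
  (forall i j, ((i, j) \in W) || ((j, i) \in W)).

Definition charvec (R : ringType) n (W : {set 'I_n * 'I_n}) : vec R n :=
  fun a => if val a \in W then 1 else 0.

Definition P_WO (R : realFieldType) n (x : vec R n) : Prop :=
  exists lam : {ffun {set 'I_n * 'I_n} -> R},
    (forall W, 0 <= lam W) /\
    (forall W, lam W != 0 -> weak_order W) /\
    \sum_W lam W = 1 /\
    (forall a, x a = \sum_W lam W * charvec R W a).

Definition aff_indep (R : ringType) n k (v : 'I_k -> vec R n) : Prop :=
  forall c : 'I_k -> R,
    (forall a, \sum_(i < k) c i * v i a = 0) -> \sum_(i < k) c i = 0 ->
    forall i, c i = 0.

Definition has_dim (R : ringType) n (P : vec R n -> Prop) (d : nat) : Prop :=
  (exists v : 'I_d.+1 -> vec R n, (forall i, P (v i)) /\ aff_indep v) /\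
  (forall k (v : 'I_k -> vec R n), (forall i, P (v i)) -> aff_indep v ->
     (k <= d.+1)%N).

Definition linf (R : ringType) n (pi x : vec R n) : R := \sum_a pi a * x a.

Definition is_facet (R : realFieldType) n (P : vec R n -> Prop)
    (pi : vec R n) (pi0 : R) : Prop :=
  (forall x, P x -> linf pi x <= pi0) /\
  (exists x, P x /\ linf pi x = pi0) /\
  (exists x, P x /\ linf pi x != pi0) /\
  (exists d, has_dim P d /\
     exists v : 'I_d -> vec R n,
       (forall i, P (v i) /\ linf pi (v i) = pi0) /\ aff_indep v).

Definition ineq_lhs (R : ringType) n (i1 i2 : 'I_n) (x : vec R n) : R :=
  xc x i2 i1
  + \sum_(j | j \notin [set i1; i2]) (xc x i1 j + xc x j i1)
  - \sum_(j | j \notin [set i1; i2]) xc x i2 j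
  - \sum_(j | j \notin [set i1; i2])
      \sum_(j' | (j' \notin [set i1; i2]) && (j' != j)) xc x j j'.

Definition ineq_coef (R : ringType) n (i1 i2 : 'I_n) : vec R n :=
  fun a => ineq_lhs i1 i2 (fun b => if b == a then 1 else 0).

(* Main.v *)
Require Import Defs.
From mathcomp Require Import all_boot all_order all_algebra.
From mathcomp Require Import zify ring lra.
From Stdlib Require Import FunctionalExtensionality.
Require Import Defs.
Set Implicit Arguments. Unset Strict Implicit. Unset Printing Implicit Defensive.
Import Order.TTheory GRing.Theory Num.Theory.
Local Open Scope ring_scope.
Lemma xc_diag (R : ringType) n (x : vec R n) i : xc x i i = 0.
Proof. by rewrite /xc insubF //= eqxx. Qed.

Lemma xc_val (R : ringType) n (x : vec R n) (e : arc n) :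
  xc x (val e).1 (val e).2 = x e.
Proof. by rewrite /xc -surjective_pairing valK. Qed.

Lemma sum_arc (R : ringType) n (F : 'I_n * 'I_n -> R) :
  \sum_(e : arc n) F (val e) = \sum_(p | p.1 != p.2) F p.
Proof.
rewrite (reindex_omap (fun e : arc n => val e) insub) //=.
  by apply: eq_bigl => e; rewrite valK eqxx (valP e).
by move=> p hp; rewrite insubT.
Qed.

Lemma linfE (R : ringType) n (u v : vec R n) :
  linf u v = \sum_i \sum_j xc u i j * xc v i j.
Proof.
rewrite /linf pair_big /=.
rewrite (bigID (fun p : 'I_n * 'I_n => p.1 != p.2)) /=.
rewrite [X in _ = _ + X]big1 ?addr0; last first.
  by move=> [i j] /= /negPn /eqP ->; rewrite xc_diag mul0r.
rewrite -(sum_arc (fun p => xc u p.1 p.2 * xc v p.1 p.2)).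
by apply: eq_bigr => e _; rewrite !xc_val.
Qed.

Definition Wr n (r : 'I_n -> nat) : {set 'I_n * 'I_n} := [set p | r p.2 <= r p.1]%N.
Definition cvr (R : ringType) n (r : 'I_n -> nat) : vec R n := charvec R (Wr r).
Definition ind (R : ringType) n (r : 'I_n -> nat) (i j : 'I_n) : R :=
  ((r j <= r i)%N : nat)%:R.

Lemma xc_cvr (R : ringType) n r (i j : 'I_n) : i != j -> xc (cvr R r) i j = ind R r i j.
Proof.
move=> hij; rewrite /xc insubT /cvr /charvec /= /Wr inE /ind /=.
by case: (r j <= r i)%N.
Qed.

Lemma Wr_weak n (r : 'I_n -> nat) : weak_order (Wr r).
Proof.
rewrite /weak_order /Wr; split; [|split].
- by move=> i; rewrite inE.
- move=> i j k; rewrite !inE /= => h1 h2; exact: leq_trans h2 h1.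
- by move=> i j; rewrite !inE /=; apply: leq_total.
Qed.

Lemma P_charvec (R : realFieldType) n (W : {set 'I_n * 'I_n}) :
  weak_order W -> P_WO (charvec R W).
Proof.
move=> hW; exists [ffun W' => ((W' == W) : nat)%:R]; split; [|split; [|split]].
- by move=> W'; rewrite ffunE ler0n.
- by move=> W'; rewrite ffunE; have [->|_] := eqVneq W' W; rewrite ?eqxx.
- rewrite (bigD1 W) //= ffunE eqxx big1 ?addr0 // => W' /negPf hW'.
  by rewrite ffunE hW'.
- move=> a; rewrite (bigD1 W) //= ffunE eqxx mul1r big1 ?addr0 // => W' /negPf hW'.
  by rewrite ffunE hW' mul0r.
Qed.

Lemma P_cvr (R : realFieldType) n (r : 'I_n -> nat) : P_WO (cvr R r).
Proof. exact/P_charvec/Wr_weak. Qed.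

Lemma linf_cvr (R : ringType) n (c : vec R n) r :
  linf c (cvr R r) = \sum_i \sum_j xc c i j * ind R r i j.
Proof.
rewrite linfE; apply: eq_bigr => i _; apply: eq_bigr => j _.
have [->|hij] := eqVneq i j; first by rewrite !xc_diag !mul0r.
by rewrite xc_cvr.
Qed.

Lemma linf_diff (R : ringType) n (c : vec R n) (r1 r2 : 'I_n -> nat) (s : seq 'I_n) :
  uniq s ->
  (forall k, k \notin s -> r1 k = r2 k) ->
  (forall k l, k \notin s -> l \in s ->
     ((r1 l <= r1 k) = (r2 l <= r2 k))%N /\ ((r1 k <= r1 l) = (r2 k <= r2 l))%N) ->
  linf c (cvr R r1) - linf c (cvr R r2) =
  \sum_(u <- s) \sum_(v <- s) xc c u v * (ind R r1 u v - ind R r2 u v).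
Proof.
move=> us h1 h2; rewrite !linf_cvr -sumrB.
under eq_bigr do rewrite -sumrB.
under eq_bigr do under eq_bigr do rewrite -mulrBr.
rewrite (bigID (fun i => i \in s)) /= [X in _ + X]big1 ?addr0 -?(big_uniq _ us).
  apply: eq_big_seq => u us'.
  rewrite (bigID (fun j => j \in s)) /= [X in _ + X]big1 ?addr0 -?(big_uniq _ us) //.
  move=> v vs; rewrite /ind; have [_ ->] := h2 v u vs us'.
  by rewrite subrr mulr0.
move=> u us'; apply: big1 => v _; rewrite /ind.
case: (boolP (v \in s)) => vs.
  by have [-> _] := h2 u v us' vs; rewrite subrr mulr0.
by rewrite (h1 _ us') (h1 _ vs) subrr mulr0.
Qed.

Lemma split_lshift m n (x : 'I_m) : split (lshift n x) = inl x.
Proof. exact: (unsplitK (inl x)). Qed.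
Lemma split_rshift m n (x : 'I_n) : split (rshift m x) = inr x.
Proof. exact: (unsplitK (inr x)). Qed.

Definition DA n := #|{: arc n}|.

Definition MV (R : ringType) n k (v : 'I_k -> vec R n) : 'M[R]_(k, DA n + 1) :=
  \matrix_(i, j) match split j with inl e => v i (enum_val e) | inr _ => 1 end.

Lemma sum_DA (R : ringType) n (G : arc n -> R) :
  \sum_(e : 'I_(DA n)) G (enum_val e) = \sum_e G e.
Proof. by rewrite -big_enum_val. Qed.

Lemma mulMV (R : ringType) n k (v : 'I_k -> vec R n) (c : 'rV[R]_k) j :
  (c *m MV v) 0 j = match split j with
   | inl e => \sum_i c 0 i * v i (enum_val e) | inr _ => \sum_i c 0 i end.
Proof.
rewrite mxE; under eq_bigr do rewrite mxE; case: (split j) => [e|e] //; by under eq_bigr do rewrite mulr1.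
Qed.

Lemma aff_of_free (R : fieldType) n k (v : 'I_k -> vec R n) :
  (forall c : 'rV_k, c *m MV v = 0 -> c = 0) -> aff_indep v.
Proof.
move=> h c hc hs i.
have -> : c i = (\row_i c i) 0 i by rewrite mxE.
rewrite (h (\row_i c i)) ?mxE //.
apply/rowP => j; rewrite mulMV mxE.
case: (split j) => [e|e].
  by rewrite -[RHS](hc (enum_val e)); apply: eq_bigr => i' _; rewrite mxE.
by rewrite -[RHS]hs; apply: eq_bigr => i' _; rewrite mxE.
Qed.

Lemma free_of_aff (R : fieldType) n k (v : 'I_k -> vec R n) :
  aff_indep v -> forall c : 'rV_k, c *m MV v = 0 -> c = 0.
Proof.
move=> h c hc; apply/rowP => i; rewrite mxE.
apply: (h (fun i => c 0 i)) => [a|].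
  have := congr1 (fun M : 'M[R]_(1, DA n + 1) => M 0 (lshift 1 (enum_rank a))) hc.
  by rewrite mulMV mxE split_lshift enum_rankK.
have := congr1 (fun M : 'M[R]_(1, DA n + 1) => M 0 (rshift (DA n) ord0)) hc.
by rewrite mulMV mxE split_rshift.
Qed.

Lemma aff_le (R : fieldType) n k (v : 'I_k -> vec R n) :
  aff_indep v -> (k <= DA n + 1)%N.
Proof.
move=> h; have hf : row_free (MV v) by apply: inj_row_free; apply: free_of_aff.
rewrite /row_free in hf; rewrite -(eqP hf); exact: rank_leq_col.
Qed.

Lemma aff_sub (R : ringType) n r k (u : 'I_r -> vec R n) (H : (k <= r)%N) :
  aff_indep u -> aff_indep (fun i => u (widen_ord H i)).
Proof.
move=> h c hc hs.
pose c' (j : 'I_r) : R := oapp c 0 (insub (val j) : option 'I_k).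
have Esum : forall G : 'I_r -> R, \sum_(j < r) c' j * G j = \sum_(i < k) c i * G (widen_ord H i).
  move=> G; rewrite (bigID (fun j : 'I_r => (j < k)%N)) /= [X in _ + X]big1 ?addr0.
    rewrite (big_ord_narrow H).
    apply: eq_bigr => i _; congr (_ * _).
    by rewrite /c' /= (_ : insub (val i) = Some i) //; apply: valK.
  by move=> j hj; rewrite /c' insubF ?mul0r //; apply/negbTE.
have hc' : forall j, c' j = 0.
  apply: h => [a|]; first by rewrite Esum hc.
  have := Esum (fun _ => 1); under eq_bigr do rewrite mulr1.
  by move=> ->; under eq_bigr do rewrite mulr1.
move=> i; have := hc' (widen_ord H i).
by rewrite /c' /= (_ : insub (val i) = Some i) //; apply: valK.
Qed.

Definition zvec (R : ringType) n (cs : vec R n) (cs0 : R) : 'rV[R]_(DA n + 1) :=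
  \row_j match split j with inl e => cs (enum_val e) | inr _ => - cs0 end.

Lemma extract (R : fieldType) n (T : finType) (w : T -> vec R n) (cs : vec R n) (cs0 : R) :
  (forall c c0, (forall t, linf c (w t) = c0) ->
     exists l, (forall e, c e = l * cs e) /\ c0 = l * cs0) ->
  forall k, (k + \rank (zvec cs cs0) <= DA n + 1)%N ->
  exists v : 'I_k -> vec R n, (forall i, exists t, v i = w t) /\ aff_indep v.
Proof.
move=> hK k hk.
pose wv := fun i : 'I_#|T| => w (enum_val i).
pose M := MV wv.
have hker : (kermx M^T <= zvec cs cs0)%MS.
  apply/row_subP => i.
  set u := row i (kermx M^T).
  have hu : u *m M^T = 0 by apply/sub_kermxP; exact: row_sub.
  clearbody u.
  pose c : vec R n := fun e => u 0 (lshift 1 (enum_rank e)).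
  pose c0 := - u 0 (rshift (DA n) ord0).
  have hct : forall t, linf c (w t) = c0.
    move=> t; have := congr1 (fun N : 'M[R]_(1, #|T|) => N 0 (enum_rank t)) hu.
    rewrite !mxE big_split_ord /= big_ord1 !mxE split_rshift mulr1.
    rewrite /linf -sum_DA /c0 => h; apply/eqP; rewrite -subr_eq0 opprK -[X in _ == X]h.
    apply/eqP; congr (_ + _); apply: eq_bigr => e _.
    by rewrite !mxE split_lshift /wv /c enum_valK enum_rankK.
  have [l [hl1 hl2]] := hK c c0 hct.
  apply/submxP; exists l%:M; rewrite mul_scalar_mx.
  apply/rowP => j; rewrite -[j]splitK; case: (split j) => e /=; rewrite !mxE.
    by rewrite split_lshift -hl1 /c enum_valK.
  by rewrite split_rshift ord1 mulrN -hl2 /c0 opprK.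
have hr : (k <= \rank M)%N.
  have := mxrankS hker; rewrite mxrank_ker mxrank_tr; lia.
pose f := maxrankfun M.
have hrow : rowsub f M = MV (fun i => wv (f i)).
  by apply/matrixP => i j; rewrite !mxE.
have haff : aff_indep (fun i => wv (f i)).
  apply: aff_of_free => c hc.
  have hfree := row_free_inj (maxrowsub_free M).
  apply: hfree; rewrite /= hrow hc; by rewrite mul0mx.
exists (fun i => wv (f (widen_ord hr i))); split.
  by move=> i; exists (enum_val (f (widen_ord hr i))).
exact: (@aff_sub _ _ _ _ (fun i => wv (f i)) hr haff).
Qed.

Lemma xc_lin (R : ringType) n (K : arc n -> R) (f : arc n -> vec R n) i j :
  xc (fun e => \sum_e' K e' * f e' e) i j = \sum_e' K e' * xc (f e') i j.
Proof.
rewrite /xc; case: insub => [e|] //.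
by rewrite big1 // => e' _; rewrite mulr0.
Qed.

Lemma lhs_lin (R : ringType) n (a b : 'I_n) (K : arc n -> R) (f : arc n -> vec R n) :
  ineq_lhs a b (fun e => \sum_e' K e' * f e' e) = \sum_e' K e' * ineq_lhs a b (f e').
Proof.
rewrite /ineq_lhs.
rewrite (_ : xc (fun e => \sum_e' K e' * f e' e) = fun i j => \sum_e' K e' * xc (f e') i j);
  last by apply: functional_extensionality => i; apply: functional_extensionality => j; apply: xc_lin.
under [in RHS]eq_bigr do rewrite mulrBr mulrBr mulrDr !mulr_sumr.
rewrite [in RHS]sumrB [in RHS]sumrB [in RHS]big_split /=; congr (_ + _ - _ - _).
- rewrite exchange_big; apply: eq_bigr => e _; rewrite -big_split /=.
  by apply: eq_bigr => j _; rewrite mulrDr.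
- by rewrite exchange_big.
- under [in RHS]eq_bigr do under eq_bigr do rewrite mulr_sumr.
  rewrite [in RHS]exchange_big; apply: eq_bigr => j _.
  by rewrite [in RHS]exchange_big.
Qed.

Definition bR (R : ringType) (x : bool) : R := (x : nat)%:R.
Lemma bRT (R : ringType) : bR R true = 1. Proof. by []. Qed.
Lemma bRF (R : ringType) : bR R false = 0. Proof. by []. Qed.

Lemma linf_lhs (R : comRingType) n (a b : 'I_n) (x : vec R n) :
  linf (ineq_coef R a b) x = ineq_lhs a b x.
Proof.
rewrite {2}(_ : x = fun e => \sum_e' x e' * (if e == e' then 1 else 0)); last first.
  apply: functional_extensionality => e.
  rewrite (bigD1 e) //= eqxx mulr1 big1 ?addr0 // => e' /negPf ne.
  by rewrite eq_sym ne mulr0.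
rewrite lhs_lin /linf; apply: eq_bigr => e _; by rewrite mulrC.
Qed.

Lemma sum_pick (R : ringType) n (P : pred 'I_n) (C : 'I_n -> bool) (u : 'I_n) :
  \sum_(j | P j) bR R ((j == u) && C j) = bR R (P u && C u).
Proof.
case: (boolP (P u)) => Pu.
  rewrite (bigD1 u) //= eqxx /= big1 ?addr0 //.
  by move=> j /andP [_ /negPf ->].
rewrite big1 // => j Pj; case: eqP => [e|] //; by subst; rewrite Pj in Pu.
Qed.

Definition Pc (R : ringType) n (a b u v : 'I_n) : R :=
  bR R ((b == u) && (a == v)) + (bR R ((a == u) && (v \notin [set a; b]))
  + bR R ((u \notin [set a; b]) && (a == v))) - bR R ((b == u) && (v \notin [set a; b]))
  - bR R ((u \notin [set a; b]) && ((v \notin [set a; b]) && (v != u))).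

Lemma coefP (R : ringType) n (a b u v : 'I_n) :
  xc (ineq_coef R a b) u v = if u == v then 0 else Pc R a b u v.
Proof.
have [->|huv] := eqVneq u v; first by rewrite xc_diag.
rewrite /xc insubT /ineq_coef.
set e0 := Sub _ _.
rewrite /ineq_lhs /Pc (_ : xc (fun e => if e == e0 then 1 else 0) = fun s t => bR R ((s == u) && (t == v))); last first.
  apply: functional_extensionality => s; apply: functional_extensionality => t.
  have [->|hst] := eqVneq s t.
    rewrite xc_diag; case: eqP => [->|//]; by rewrite (negPf huv) andbF.
  rewrite /xc insubT -val_eqE /= xpair_eqE.
  by case: (_ && _).
congr (_ + _ - _ - _).
- rewrite big_split /=; congr (_ + _).
    under eq_bigr do rewrite andbC.
    by rewrite sum_pick andbC.
  by rewrite sum_pick.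
- under eq_bigr do rewrite andbC.
  by rewrite sum_pick andbC.
- under eq_bigr => j _ do under eq_bigr do rewrite andbC.
  under eq_bigr => j _ do rewrite (@sum_pick R n (fun j' => (j' \notin [set a; b]) && (j' != j))) andbC.
  by rewrite sum_pick.
Qed.

Lemma bRM (R : ringType) x y : bR R x * bR R y = bR R (x && y).
Proof. by case: x; case: y; rewrite /bR /= ?mulr1 ?mulr0. Qed.

Lemma bR01 (R : realDomainType) x : bR R x = 0 \/ bR R x = 1.
Proof. by case: x; [right|left]. Qed.

Lemma sym_sum (R : nmodType) n (P : pred 'I_n) (G : 'I_n -> 'I_n -> R) :
  \sum_(j | P j) \sum_(j' | P j' && (j' != j)) G j' j =
  \sum_(j | P j) \sum_(j' | P j' && (j' != j)) G j j'.
Proof.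
rewrite (exchange_big_dep P) /=; last by move=> i j _ /andP[].
apply: eq_bigr => j Pj; apply: eq_bigl => j'; by rewrite Pj eq_sym.
Qed.

Lemma sumD1_P (R : zmodType) n (P : pred 'I_n) (F : 'I_n -> R) j :
  P j -> \sum_(j' | P j' && (j' != j)) F j' = \sum_(j' | P j') F j' - F j.
Proof. by move=> Pj; rewrite [X in _ = X - _](bigD1 j) //= addrC addrK. Qed.

Definition mR (R : ringType) n (a b : 'I_n) : R := \sum_(j | j \notin [set a; b]) 1.

Lemma mRE (R : ringType) n (a b : 'I_n) : a != b -> mR R a b = (n - 2)%:R.
Proof.
move=> ab; rewrite /mR -[1]/(1%:R) -natr_sum sum1dep_card.
have h := cardsC [set a; b]; rewrite cards2 ab card_ord in h.
rewrite (_ : [set x | x \notin [set a; b]] = ~: [set a; b]) //.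
by rewrite -[in RHS]h addKn.
Qed.

Lemma xc_charvec (R : ringType) n (W : {set 'I_n * 'I_n}) i j :
  i != j -> xc (charvec R W) i j = bR R ((i, j) \in W).
Proof. by move=> ij; rewrite /xc insubT /charvec /=; case: (_ \in _). Qed.

Lemma notinH n (a b j : 'I_n) : j \notin [set a; b] -> (j != a) /\ (j != b).
Proof. by rewrite in_set2 negb_or => /andP. Qed.

Lemma S2_bound (R : realFieldType) n (P : pred 'I_n) (X : 'I_n -> 'I_n -> R)
   (y : 'I_n -> bool) :
  (forall j j', P j -> P j' -> j' != j -> 1 + bR R (y j) * bR R (y j') <= X j j' + X j' j) ->
  (\sum_(j | P j) (1 : R)) * ((\sum_(j | P j) (1 : R)) - 1)
  + (\sum_(j | P j) bR R (y j)) * (\sum_(j | P j) bR R (y j)) - (\sum_(j | P j) bR R (y j))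
  <= 2 * \sum_(j | P j) \sum_(j' | P j' && (j' != j)) X j j'.
Proof.
move=> hX; set m := \sum_(j | P j) (1 : R); set t := \sum_(j | P j) bR R (y j).
rewrite mulr2n mulrDl mul1r.
rewrite -{2}sym_sum -big_split /=.
under eq_bigr do rewrite -big_split /=.
apply: le_trans (_ : \sum_(j | P j) \sum_(j' | P j' && (j' != j)) (1 + bR R (y j) * bR R (y j')) <= _).
  rewrite le_eqVlt; apply/orP; left; apply/eqP.
  under eq_bigr => j Pj do rewrite big_split /= -mulr_sumr !sumD1_P //.
  rewrite -/m -/t big_split /=.
  rewrite (_ : \sum_(j | P j) (m - 1) = m * (m - 1)); last first.
    by rewrite {1}/m mulr_suml; apply: eq_bigr => j _; rewrite mul1r.
  rewrite (_ : \sum_(j | P j) bR R (y j) * (t - bR R (y j)) = t * t - t); first by rewrite addrA.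
  under eq_bigr do rewrite mulrBr bRM andbb.
  by rewrite sumrB -mulr_suml.
apply: ler_sum => j Pj; apply: ler_sum => j' /andP [Pj' ne].
exact: hX.
Qed.

Lemma cnt_pairs (R : ringType) n (P : pred 'I_n) :
  \sum_(j | P j) \sum_(j' | P j' && (j' != j)) (1 : R) =
  (\sum_(j | P j) (1 : R)) * ((\sum_(j | P j) (1 : R)) - 1).
Proof.
rewrite mulr_suml; apply: eq_bigr => j Pj; by rewrite sumD1_P // mul1r.
Qed.

Lemma nat3 (R : realDomainType) (T : nat) :
  T%:R = 0 :> R \/ T%:R = 1 :> R \/ 2 <= T%:R :> R.
Proof.
have : (T = 0 \/ T = 1 \/ 2 <= T)%N by lia.
case=> [->|[->|h]]; [by left|by right; left|right; right].
by rewrite (ler_nat R 2 T).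
Qed.

Lemma valid_wo (R : realFieldType) n (a b : 'I_n) (W : {set 'I_n * 'I_n}) :
  a != b -> weak_order W ->
  ineq_lhs a b (charvec R W) <= 1 + mR R a b - mR R a b * (mR R a b - 1) / 2.
Proof.
move=> ab [refl [tr tot]].
have ba : b != a by rewrite eq_sym.
pose P := fun j : 'I_n => j \notin [set a; b].
pose yb j := ((a, j) \in W) && ((j, a) \in W).
pose t := \sum_(j | P j) bR R (yb j).
have E1 : \sum_(j | P j) (xc (charvec R W) a j + xc (charvec R W) j a) = mR R a b + t.
  rewrite /mR /t -big_split; apply: eq_bigr => j /notinH [ja jb].
  rewrite !xc_charvec // ?(eq_sym a) // /yb.
  have := tot a j; case: ((a, j) \in W); case: ((j, a) \in W) => //= _; by rewrite /bR /= ?addr0 ?add0r.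
have E2 : bR R ((b, a) \in W) * t <= \sum_(j | P j) xc (charvec R W) b j.
  rewrite /t mulr_sumr; apply: ler_sum => j /notinH [ja jb].
  rewrite xc_charvec ?(eq_sym b) // bRM /yb.
  case E: [&& (b, a) \in W, (a, j) \in W & (j, a) \in W].
    by case/and3P: E => h1 h2 _; rewrite (tr _ _ _ h1 h2).
  by rewrite /bR /= ler0n.
have E3 := @S2_bound R n P (fun i j => xc (charvec R W) i j) yb.
have E3' : forall j j', P j -> P j' -> j' != j ->
   1 + bR R (yb j) * bR R (yb j') <= xc (charvec R W) j j' + xc (charvec R W) j' j.
  move=> j j' Pj Pj' ne; rewrite !xc_charvec // ?(eq_sym j) // bRM.
  case E: (yb j && yb j').
    case/andP: E => /andP [h1 h2] /andP [h3 h4].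
    by rewrite (tr _ _ _ h2 h3) (tr _ _ _ h4 h1) /bR /=.
  rewrite /bR /= addr0.
  by have := tot j j'; case: ((j, j') \in W); case: ((j', j) \in W) => //= _; lra.
have {E3 E3'} E3 := E3 E3'.
rewrite /ineq_lhs (xc_charvec _ _ ba) -/P E1.
move: E2 E3; rewrite -/t /mR -/P.
set S2 := \sum_(j | P j) \sum_(j' | P j' && (j' != j)) xc (charvec R W) j j'.
set Sb := \sum_(j | P j) xc (charvec R W) b j.
set m := \sum_(j | P j) (1 : R).
have tE : t = (\sum_(j | P j) (yb j : nat))%:R by rewrite natr_sum.
have := nat3 R (\sum_(j | P j) (yb j : nat)); rewrite -tE.
case: (bR01 R ((b, a) \in W)) => ->.
  case=> [->|[->|ht]] h2 h3; nra.
case=> [->|[->|ht]] h2 h3; nra.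
Qed.

Lemma linf_conv (R : comRingType) n (c x : vec R n) (lam : {ffun {set 'I_n * 'I_n} -> R}) :
  (forall a, x a = \sum_W lam W * charvec R W a) ->
  linf c x = \sum_W lam W * linf c (charvec R W).
Proof.
move=> hx; rewrite /linf; under eq_bigr do rewrite hx mulr_sumr.
rewrite exchange_big; apply: eq_bigr => W _; rewrite mulr_sumr.
by apply: eq_bigr => e _; rewrite mulrCA.
Qed.

Lemma pi0E (R : realFieldType) n (a b : 'I_n) : (4 <= n)%N -> a != b ->
  1 + mR R a b - mR R a b * (mR R a b - 1) / 2 = 2 - ((n - 3) * (n - 4))%:R / 2.
Proof.
move=> n4 ab; rewrite mRE //.
have -> : (n - 2 = (n - 4) + 2)%N by lia.
have -> : (n - 3 = (n - 4) + 1)%N by lia.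
move: (n - 4)%N => k.
by rewrite natrM !natrD; field.
Qed.

Lemma valid_P (R : realFieldType) n (a b : 'I_n) (x : vec R n) :
  (4 <= n)%N -> a != b -> P_WO x ->
  linf (ineq_coef R a b) x <= 2 - ((n - 3) * (n - 4))%:R / 2.
Proof.
move=> n4 ab [lam [h0 [hw [h1 hx]]]].
rewrite (linf_conv _ hx).
apply: le_trans (_ : \sum_W lam W * (2 - ((n - 3) * (n - 4))%:R / 2) <= _).
  apply: ler_sum => W _.
  have [->|nz] := eqVneq (lam W) 0; first by rewrite !mul0r.
  apply: ler_wpM2l => //.
  rewrite linf_lhs -(pi0E R n4 ab); exact: valid_wo (hw _ nz).
by rewrite -mulr_suml h1 mul1r.
Qed.

Lemma lhs_strict (R : realFieldType) n (a b : 'I_n) (r : 'I_n -> nat) :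
  a != b -> (r a < r b)%N -> (forall j, j \notin [set a; b] -> (r b < r j)%N) ->
  (forall j j', j \notin [set a; b] -> j' \notin [set a; b] -> j != j' -> r j != r j') ->
  ineq_lhs a b (cvr R r) = 1 + mR R a b - mR R a b * (mR R a b - 1) / 2.
Proof.
move=> ab hab hbj hinj.
have ba : b != a by rewrite eq_sym.
pose P := fun j : 'I_n => j \notin [set a; b].
rewrite /ineq_lhs (xc_cvr _ _ ba) /ind (ltnW hab) -/P.
have E1 : \sum_(j | P j) (xc (cvr R r) a j + xc (cvr R r) j a) = mR R a b.
  apply: eq_bigr => j Pj; have [ja jb] := notinH Pj.
  have h := hbj j Pj.
  rewrite !xc_cvr ?(eq_sym a) // /ind.
  rewrite (_ : (r j <= r a)%N = false); last by apply/negbTE; rewrite -ltnNge; lia.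
  rewrite (_ : (r a <= r j)%N = true); last by lia.
  by rewrite add0r.
have E2 : \sum_(j | P j) xc (cvr R r) b j = 0.
  apply: big1 => j Pj; have [ja jb] := notinH Pj.
  have h := hbj j Pj.
  rewrite xc_cvr ?(eq_sym b) // /ind.
  by rewrite (_ : (r j <= r b)%N = false) //; apply/negbTE; rewrite -ltnNge.
rewrite E1 E2.
set S2 := \sum_(j | P j) \sum_(j' | P j' && (j' != j)) xc (cvr R r) j j'.
have E3 : S2 + S2 = mR R a b * (mR R a b - 1).
  rewrite {2}/S2 -sym_sum /S2 -big_split /mR -cnt_pairs /=.
  apply: eq_bigr => j Pj; rewrite -big_split /=; apply: eq_bigr => j' /andP [Pj' ne].
  have ne' : j != j' by rewrite eq_sym.
  rewrite !xc_cvr // /ind.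
  have := hinj _ _ Pj Pj'; rewrite eq_sym => /(_ ne); rewrite eq_sym.
  by case: (ltngtP (r j) (r j')) => //= h _; rewrite ?add0r ?addr0.
move: E3; set m := mR R a b; rewrite /bR /=; lra.
Qed.

Definition mkr n (a b p q : 'I_n) (va vb vp vq : nat) : 'I_n -> nat :=
  fun k => if k == a then va else if k == b then vb else if k == p then vp
           else if k == q then vq else (10 + k)%N.

Lemma mkr_bound n (a b p q : 'I_n) va vb vp vq k :
  (va < 10)%N -> (vb < 10)%N -> (vp < 10)%N -> (vq < 10)%N ->
  (mkr a b p q va vb vp vq k < 10 + n)%N.
Proof.
move=> *; rewrite /mkr.
case: (k == a); [lia|]; case: (k == b); [lia|]; case: (k == p); [lia|];
case: (k == q); [lia|]; have := ltn_ord k; lia.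
Qed.

Lemma mkr_diff (R : ringType) n (a b p q : 'I_n) (c : vec R n) va vb vp vq wa wb wp wq :
  uniq [:: a; b; p; q] ->
  (va < 10)%N -> (vb < 10)%N -> (vp < 10)%N -> (vq < 10)%N ->
  (wa < 10)%N -> (wb < 10)%N -> (wp < 10)%N -> (wq < 10)%N ->
  linf c (cvr R (mkr a b p q va vb vp vq)) - linf c (cvr R (mkr a b p q wa wb wp wq)) =
  \sum_(u <- [:: a; b; p; q]) \sum_(v <- [:: a; b; p; q])
     xc c u v * (ind R (mkr a b p q va vb vp vq) u v - ind R (mkr a b p q wa wb wp wq) u v).
Proof.
move=> us h1 h2 h3 h4 h5 h6 h7 h8; apply: linf_diff => //.
  move=> k; rewrite !inE !negb_or => /and4P [ka kb kp kq].
  by rewrite /mkr (negbTE ka) (negbTE kb) (negbTE kp) (negbTE kq).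
move=> k l; rewrite !inE !negb_or => /and4P [/negbTE ka /negbTE kb /negbTE kp /negbTE kq].
have Ek : forall v1 v2 v3 v4, mkr a b p q v1 v2 v3 v4 k = (10 + k)%N.
  by move=> *; rewrite /mkr ka kb kp kq.
rewrite !Ek.
have Hl : forall v1 v2 v3 v4, (v1 < 10)%N -> (v2 < 10)%N -> (v3 < 10)%N -> (v4 < 10)%N ->
   [|| l == a, l == b, l == p | l == q] -> (mkr a b p q v1 v2 v3 v4 l < 10)%N.
  move=> v1 v2 v3 v4 g1 g2 g3 g4; rewrite /mkr.
  case: (l == a) => //; case: (l == b) => //; case: (l == p) => //; case: (l == q) => //.
move=> hl.
have := Hl _ _ _ _ h1 h2 h3 h4 hl; have := Hl _ _ _ _ h5 h6 h7 h8 hl.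
move=> g1 g2; split.
  rewrite (_ : (mkr a b p q va vb vp vq l <= 10 + k)%N = true); last by lia.
  by rewrite (_ : (mkr a b p q wa wb wp wq l <= 10 + k)%N = true); last by lia.
rewrite (_ : (10 + k <= mkr a b p q va vb vp vq l)%N = false); last by lia.
by rewrite (_ : (10 + k <= mkr a b p q wa wb wp wq l)%N = false); last by lia.
Qed.

Lemma mkrA n (a b p q : 'I_n) v1 v2 v3 v4 : mkr a b p q v1 v2 v3 v4 a = v1.
Proof. by rewrite /mkr eqxx. Qed.
Lemma mkrB n (a b p q : 'I_n) v1 v2 v3 v4 : (b == a) = false -> mkr a b p q v1 v2 v3 v4 b = v2.
Proof. by move=> h; rewrite /mkr h eqxx. Qed.
Lemma mkrP n (a b p q : 'I_n) v1 v2 v3 v4 : (p == a) = false -> (p == b) = false ->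
  mkr a b p q v1 v2 v3 v4 p = v3.
Proof. by move=> h1 h2; rewrite /mkr h1 h2 eqxx. Qed.
Lemma mkrQ n (a b p q : 'I_n) v1 v2 v3 v4 : (q == a) = false -> (q == b) = false ->
  (q == p) = false -> mkr a b p q v1 v2 v3 v4 q = v4.
Proof. by move=> h1 h2 h3; rewrite /mkr h1 h2 h3 eqxx. Qed.

Ltac crunch mA mB mP mQ EQ EQ' hin := rewrite !big_cons !big_nil /ind ?mA ?mB ?mP ?mQ !xc_diag ?coefP ?eqxx ?EQ ?EQ' /Pc ?hin ?eqxx ?EQ ?EQ' /= /bR /=.
Ltac crunchIn mA mB mP mQ E := rewrite !big_cons !big_nil /ind ?mA ?mB ?mP ?mQ !xc_diag /= /bR /= in E.

Definition pi0 (R : realFieldType) n : R := 2 - ((n - 3) * (n - 4))%:R / 2.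

Lemma T1_tight (R : realFieldType) n (a b p q : 'I_n) :
  (4 <= n)%N -> a != b -> p \notin [set a; b] -> q \notin [set a; b] -> p != q ->
  linf (ineq_coef R a b) (cvr R (mkr a b p q 1 2 3 4)) = pi0 R n.
Proof.
move=> n4 ab hp hq pq.
have ba : b != a by rewrite eq_sym.
have [pa pb] := notinH hp; have [qa qb] := notinH hq.
have qp : q != p by rewrite eq_sym.
have mA := @mkrA n a b p q.
have mB := @mkrB n a b p q _ _ _ _ (negbTE ba).
  rewrite linf_lhs /pi0 -(pi0E R n4 ab); apply: lhs_strict => //.
  - by rewrite mA mB.
  - move=> j /notinH [ja jb]; rewrite mB /mkr (negbTE ja) (negbTE jb).
    by case: (j == p) => //; case: (j == q) => //; lia.
  - move=> j j' /notinH [ja jb] /notinH [j'a j'b] jj'.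
    rewrite /mkr (negbTE ja) (negbTE jb) (negbTE j'a) (negbTE j'b).
    case: (eqVneq j p) => [ejp|jp]; case: (eqVneq j' p) => [ej'p|j'p] //=.
    + by rewrite ejp ej'p eqxx in jj'.
    + by case: (j' == q).
    + by case: (j == q).
    + case: (eqVneq j q) => [ejq|jq]; case: (eqVneq j' q) => [ej'q|j'q] //=.
      * by rewrite ejq ej'q eqxx in jj'.
Qed.

Lemma rels (R : realFieldType) n (a b p q : 'I_n) (c : vec R n) (c0 : R) :
  (4 <= n)%N -> a != b -> p \notin [set a; b] -> q \notin [set a; b] -> p != q ->
  (forall r : 'I_n -> nat, (forall k, r k < 10 + n)%N ->
      linf (ineq_coef R a b) (cvr R r) = pi0 R n -> linf c (cvr R r) = c0) ->
  [/\ xc c a b = 0, xc c p b = 0, xc c a p + xc c b p = 0, xc c b p + xc c b a = 0 &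
      xc c a q + xc c p q = 0 /\ xc c p a + xc c p q = 0].
Proof.
move=> n4 ab hp hq pq hT.
have ba : b != a by rewrite eq_sym.
have [pa pb] := notinH hp; have [qa qb] := notinH hq.
have qp : q != p by rewrite eq_sym.
have EQ := (negbTE ab, negbTE ba, negbTE pa, negbTE pb, negbTE qa, negbTE qb, negbTE pq, negbTE qp).
have EQ2 : [/\ (a == p) = false, (a == q) = false, (b == p) = false & (b == q) = false].
  by rewrite ![_ == p]eq_sym ![_ == q]eq_sym !EQ.
have EQ3 := EQ2; case: EQ3 => ap aq bp bq.
have EQ' := (ap, aq, bp, bq).
have us : uniq [:: a; b; p; q] by rewrite /= !inE !EQ !EQ'.
have mA := @mkrA n a b p q.
have mB := @mkrB n a b p q _ _ _ _ (negbTE ba).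
have mP := @mkrP n a b p q _ _ _ _ (negbTE pa) (negbTE pb).
have mQ := @mkrQ n a b p q _ _ _ _ (negbTE qa) (negbTE qb) (negbTE qp).
have hin := @in_set2.
have T1t := T1_tight R n4 ab hp hq pq.
have tight : forall va vb vp vq, (va < 10)%N -> (vb < 10)%N -> (vp < 10)%N -> (vq < 10)%N ->
   linf (ineq_coef R a b) (cvr R (mkr a b p q va vb vp vq)) - linf (ineq_coef R a b) (cvr R (mkr a b p q 1 2 3 4)) = 0 ->
   linf c (cvr R (mkr a b p q va vb vp vq)) = c0.
  move=> va vb vp vq h1 h2 h3 h4 E; apply: hT; first by move=> k; apply: mkr_bound.
  by rewrite -T1t; apply/eqP; rewrite -subr_eq0; apply/eqP.
have Dpi := fun va vb vp vq => @mkr_diff R n a b p q (ineq_coef R a b) va vb vp vq 1 2 3 4 us.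
have Dc := fun va vb vp vq wa wb wp wq => @mkr_diff R n a b p q c va vb vp vq wa wb wp wq us.
have T1c : linf c (cvr R (mkr a b p q 1 2 3 4)) = c0 by apply: tight => //; rewrite subrr.
have T2c : linf c (cvr R (mkr a b p q 1 1 3 4)) = c0.
  by apply: tight => //; rewrite Dpi //; crunch mA mB mP mQ EQ EQ' hin; lra.
have T3c : linf c (cvr R (mkr a b p q 1 3 1 4)) = c0.
  by apply: tight => //; rewrite Dpi //; crunch mA mB mP mQ EQ EQ' hin; lra.
have T4c : linf c (cvr R (mkr a b p q 1 1 1 4)) = c0.
  by apply: tight => //; rewrite Dpi //; crunch mA mB mP mQ EQ EQ' hin; lra.
have T5c : linf c (cvr R (mkr a b p q 2 1 2 4)) = c0.
  by apply: tight => //; rewrite Dpi //; crunch mA mB mP mQ EQ EQ' hin; lra.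
have T6c : linf c (cvr R (mkr a b p q 2 1 2 2)) = c0.
  by apply: tight => //; rewrite Dpi //; crunch mA mB mP mQ EQ EQ' hin; lra.
have T7c : linf c (cvr R (mkr a b p q 3 1 2 3)) = c0.
  by apply: tight => //; rewrite Dpi //; crunch mA mB mP mQ EQ EQ' hin; lra.
have E1 := Dc 1 2 3 4 1 1 3 4 isT isT isT isT isT isT isT isT.
rewrite T1c T2c subrr in E1; crunchIn mA mB mP mQ E1.
have E2 := Dc 1 3 1 4 1 1 1 4 isT isT isT isT isT isT isT isT.
rewrite T3c T4c subrr in E2; crunchIn mA mB mP mQ E2.
have E3 := Dc 1 2 3 4 1 3 1 4 isT isT isT isT isT isT isT isT.
rewrite T1c T3c subrr in E3; crunchIn mA mB mP mQ E3.
have E4 := Dc 2 1 2 4 1 3 1 4 isT isT isT isT isT isT isT isT.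
rewrite T5c T3c subrr in E4; crunchIn mA mB mP mQ E4.
have E5 := Dc 2 1 2 2 2 1 2 4 isT isT isT isT isT isT isT isT.
rewrite T6c T5c subrr in E5; crunchIn mA mB mP mQ E5.
have E6 := Dc 2 1 2 2 3 1 2 3 isT isT isT isT isT isT isT isT.
rewrite T6c T7c subrr in E6; crunchIn mA mB mP mQ E6.
split; try split; lra.
Qed.

Lemma nontight (R : realFieldType) n (a b p q : 'I_n) :
  (4 <= n)%N -> a != b -> p \notin [set a; b] -> q \notin [set a; b] -> p != q ->
  linf (ineq_coef R a b) (cvr R (mkr a b p q 2 1 3 4)) != pi0 R n.
Proof.
move=> n4 ab hp hq pq.
have ba : b != a by rewrite eq_sym.
have [pa pb] := notinH hp; have [qa qb] := notinH hq.
have qp : q != p by rewrite eq_sym.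
have EQ := (negbTE ab, negbTE ba, negbTE pa, negbTE pb, negbTE qa, negbTE qb, negbTE pq, negbTE qp).
have EQ2 : [/\ (a == p) = false, (a == q) = false, (b == p) = false & (b == q) = false].
  by rewrite ![_ == p]eq_sym ![_ == q]eq_sym !EQ.
have EQ3 := EQ2; case: EQ3 => ap aq bp bq.
have EQ' := (ap, aq, bp, bq).
have us : uniq [:: a; b; p; q] by rewrite /= !inE !EQ !EQ'.
have mA := @mkrA n a b p q.
have mB := @mkrB n a b p q _ _ _ _ (negbTE ba).
have mP := @mkrP n a b p q _ _ _ _ (negbTE pa) (negbTE pb).
have mQ := @mkrQ n a b p q _ _ _ _ (negbTE qa) (negbTE qb) (negbTE qp).
have hin := @in_set2.
have T1t := T1_tight R n4 ab hp hq pq.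
have D := @mkr_diff R n a b p q (ineq_coef R a b) 2 1 3 4 1 2 3 4 us isT isT isT isT isT isT isT isT.
rewrite T1t in D; move: D; crunch mA mB mP mQ EQ EQ' hin => D.
apply/eqP => h; rewrite h in D; lra.
Qed.

Lemma kernel_full (R : realFieldType) n (c : vec R n) c0 :
  (forall r : 'I_n -> nat, (forall k, r k < 10 + n)%N -> linf c (cvr R r) = c0) ->
  (forall e, c e = 0) /\ c0 = 0.
Proof.
move=> h.
have Cz : forall i j : 'I_n, i != j -> xc c j i = 0.
  move=> i j ij.
  have ji : (j == i) = false by rewrite eq_sym; apply/negbTE.
  pose rA := fun k : 'I_n => if k == i then 2%N else if k == j then 2%N else 0%N.
  pose rB := fun k : 'I_n => if k == i then 2%N else if k == j then 1%N else 0%N.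
  have us : uniq [:: i; j] by rewrite /= inE andbT.
  have bA : forall k, (rA k < 10 + n)%N by move=> k; rewrite /rA; case: (k == i); case: (k == j).
  have bB : forall k, (rB k < 10 + n)%N by move=> k; rewrite /rB; case: (k == i); case: (k == j).
  have E : linf c (cvr R rA) - linf c (cvr R rB) =
    \sum_(u <- [:: i; j]) \sum_(v <- [:: i; j]) xc c u v * (ind R rA u v - ind R rB u v).
    apply: linf_diff => //.
      move=> k; rewrite !inE negb_or => /andP [/negbTE ki /negbTE kj].
      by rewrite /rA /rB ki kj.
    move=> k l; rewrite !inE negb_or => /andP [/negbTE ki /negbTE kj] hl.
    by rewrite /rA /rB ki kj; case/orP: hl => /eqP ->; rewrite eqxx ?ji.
  rewrite (h _ bA) (h _ bB) subrr !big_cons !big_nil /ind /rA /rB !eqxx ji !xc_diag /= /bR /= in E.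
  lra.
have ce : forall e, c e = 0.
  move=> e; rewrite -xc_val; apply: Cz; rewrite eq_sym; exact: (valP e).
split => //.
rewrite -(h (fun _ => 0%N)) // /linf big1 // => e _; by rewrite ce mul0r.
Qed.

Lemma zvec00 (R : fieldType) n : \rank (zvec (fun _ : arc n => 0 : R) 0) = 0%N.
Proof.
rewrite (_ : zvec _ _ = 0) ?mxrank0 //.
apply/rowP => j; rewrite !mxE; case: (split j) => _ //; by rewrite oppr0.
Qed.

Lemma C2 n (a b : 'I_n) : (4 <= n)%N -> a != b ->
  exists p q, [/\ p \notin [set a; b], q \notin [set a; b] & p != q].
Proof.
move=> n4 ab.
have : (1 < #|~: [set a; b]|)%N.
  have h := cardsC [set a; b]; rewrite cards2 ab card_ord in h.
  have : (#|~: [set a; b]| = n - 2)%N by rewrite -[in RHS]h addKn.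
  move=> ->; lia.
case/card_gt1P => x [y [hx hy xy]]; exists x, y.
by rewrite !in_setC in hx hy; split.
Qed.

Lemma bounded_ffun n (r : 'I_n -> nat) : (forall k, r k < 10 + n)%N ->
  (fun k : 'I_n => nat_of_ord (([ffun k => inord (r k)] : {ffun 'I_n -> 'I_(10 + n)}) k)) = r.
Proof.
move=> h; apply: functional_extensionality => k; by rewrite ffunE inordK.
Qed.

Lemma notinH' n (a b j : 'I_n) : j \notin [set a; b] ->
  [/\ (j == a) = false, (j == b) = false, (a == j) = false & (b == j) = false].
Proof.
move=> /notinH [ja jb]; split; apply/negbTE => //; by rewrite eq_sym.
Qed.

Lemma kernel_facet (R : realFieldType) n (a b : 'I_n) (c : vec R n) c0 :
  (4 <= n)%N -> a != b ->
  (forall r : 'I_n -> nat, (forall k, r k < 10 + n)%N ->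
      linf (ineq_coef R a b) (cvr R r) = pi0 R n -> linf c (cvr R r) = c0) ->
  exists l, (forall e, c e = l * ineq_coef R a b e) /\ c0 = l * pi0 R n.
Proof.
move=> n4 ab hT.
have ba : b != a by rewrite eq_sym.
have [p [q [hp hq pq]]] := C2 n4 ab.
have hR : forall p' q', p' \notin [set a; b] -> q' \notin [set a; b] -> p' != q' -> _ :=
  fun p' q' hp' hq' ne => @rels R n a b p' q' c c0 n4 ab hp' hq' ne hT.
have other : forall j, j \notin [set a; b] -> exists q', q' \notin [set a; b] /\ j != q'.
  move=> j hj; have [ejp|jp] := eqVneq j p.
    by exists q; split => //; rewrite ejp.
  by exists p.
have Hin := (in_set2, eqxx, negbTE ab, negbTE ba).
set l := xc c b a.
have key : forall u v, u != v -> xc c u v = l * Pc R a b u v.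
  move=> u v uv.
  have [eua|ua] := eqVneq u a.
    subst u; have [evb|vb] := eqVneq v b.
      subst v; have [h1 _ _ _ _] := hR p q hp hq pq.
      rewrite h1 /Pc !Hin /= /bR /=; rewrite /l; lra.
    have hv : v \notin [set a; b] by rewrite in_set2 negb_or eq_sym uv vb.
    have [q' [hq' vq']] := other v hv.
    have [_ _ h3 h4 _] := hR v q' hv hq' vq'.
    have [F1 F2 F3 F4] := notinH' hv.
    rewrite /Pc ?hv !Hin ?F1 ?F2 ?F3 ?F4 /= /bR /=; rewrite /l; lra.
  have [eub|ub] := eqVneq u b.
    subst u; have [eva|va] := eqVneq v a.
      subst v; rewrite /Pc !Hin /= /bR /=; rewrite /l; lra.
    have hv : v \notin [set a; b] by rewrite in_set2 negb_or va eq_sym uv.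
    have [q' [hq' vq']] := other v hv.
    have [_ _ h3 h4 _] := hR v q' hv hq' vq'.
    have [F1 F2 F3 F4] := notinH' hv.
    rewrite /Pc ?hv !Hin ?F1 ?F2 ?F3 ?F4 /= /bR /=; rewrite /l; lra.
  have hu : u \notin [set a; b] by rewrite in_set2 negb_or ua ub.
  have [G1 G2 G3 G4] := notinH' hu.
  have [eva|va] := eqVneq v a.
    subst v.
    have [q' [hq' uq']] := other u hu.
    have [_ _ _ _ [h5 h6]] := hR u q' hu hq' uq'.
    have [_ _ h3 h4 _] := hR q' u hq' hu (negbT (introF eqP (fun e => (negP uq') (introT eqP (esym e))))).
    rewrite /Pc ?hu !Hin ?G1 ?G2 ?G3 ?G4 /= /bR /=; rewrite /l; lra.
  have [evb|vb] := eqVneq v b.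
    subst v.
    have [q' [hq' uq']] := other u hu.
    have [_ h2 _ _ _] := hR u q' hu hq' uq'.
    rewrite /Pc ?hu !Hin ?G1 ?G2 ?G3 ?G4 /= /bR /=; rewrite /l; lra.
  have hv : v \notin [set a; b] by rewrite in_set2 negb_or va vb.
  have [F1 F2 F3 F4] := notinH' hv.
  have vu : v != u by rewrite eq_sym.
  have [_ _ _ _ [h5 h6]] := hR u v hu hv uv.
  have [_ _ h3 h4 _] := hR v u hv hu vu.
  rewrite /Pc ?hu ?hv ?vu ?Hin ?F1 ?F2 ?F3 ?F4 ?G1 ?G2 ?G3 ?G4 /= /bR /=; rewrite /l; lra.
have ce : forall e, c e = l * ineq_coef R a b e.
  move=> e; rewrite -xc_val -[ineq_coef R a b e]xc_val coefP.
  rewrite (negbTE (valP e)); exact: key (valP e).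
exists l; split => //.
have T1t := T1_tight R n4 ab hp hq pq.
rewrite -(hT _ _ T1t); last by move=> k; apply: mkr_bound.
rewrite -T1t /linf mulr_sumr; apply: eq_bigr => e _; by rewrite ce mulrA.
Qed.

Unset Implicit Arguments.

Theorem mainTheorem9 (R : realFieldType) (n : nat) (i1 i2 : 'I_n) :
  (4 <= n)%N -> i1 != i2 ->
  is_facet (@P_WO R n) (ineq_coef R i1 i2)
    (2 - ((n - 3) * (n - 4))%:R / 2).
Proof.
move=> n4 ab.
have [p [q [hp hq pq]]] := C2 n4 ab.
change (is_facet (@P_WO R n) (ineq_coef R i1 i2) (pi0 R n)).
have T1t := T1_tight R n4 ab hp hq pq.
pose rf := fun f : {ffun 'I_n -> 'I_(10 + n)} => fun k : 'I_n => nat_of_ord (f k).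
split; [|split; [|split]].
- move=> x hx; exact: valid_P.
- exists (cvr R (mkr i1 i2 p q 1 2 3 4)); split; [exact: P_cvr | exact: T1t].
- exists (cvr R (mkr i1 i2 p q 2 1 3 4)); split; [exact: P_cvr | exact: nontight].
exists (DA n); split.
  split.
    have := @extract R n {ffun 'I_n -> 'I_(10 + n)} (fun f => cvr R (rf f))
       (fun _ => 0) 0 _ (DA n).+1.
    case.
    - move=> c c0 h; exists 0.
      have hk : forall r : 'I_n -> nat, (forall k, r k < 10 + n)%N -> linf c (cvr R r) = c0.
        by move=> r hr; rewrite -(bounded_ffun hr); exact: h.
      have [h1 h2] := kernel_full hk.
      by split => [e|]; rewrite ?h1 ?h2 mul0r.
    - by rewrite zvec00 addn0 addn1.
    - move=> v [hv1 hv2]; exists v; split => // i; have [t ->] := hv1 i; exact: P_cvr.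
  move=> k v _ hv; have := aff_le hv; by rewrite addn1.
pose w := fun f : {ffun 'I_n -> 'I_(10 + n)} =>
  if linf (ineq_coef R i1 i2) (cvr R (rf f)) == pi0 R n then cvr R (rf f)
  else cvr R (mkr i1 i2 p q 1 2 3 4).
have := @extract R n {ffun 'I_n -> 'I_(10 + n)} w (ineq_coef R i1 i2) (pi0 R n) _ (DA n).
case.
- move=> c c0 h; apply: kernel_facet => // r hr tr.
  have := h [ffun k => inord (r k)]; rewrite /w /rf (bounded_ffun hr) tr eqxx; done.
- by rewrite leq_add2l; exact: rank_leq_row.
move=> v [hv1 hv2]; exists v; split => // i; have [t ->] := hv1 i; rewrite /w.
case: eqP => [h|_]; split; [exact: P_cvr | exact: h | exact: P_cvr | exact: T1t].
Qed.
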